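(* Let $R$ be a ring, $M$ an $R$-module and $\theta$ an infinite cardinal. Then $\mathrm{Aff}_2\subseteq\mathrm{Aff}_1$.
   Context: All formulas are from $\mathscr{L}_{\infty,\theta}(\tau_M)$ with fewer than $\theta$ free variables. For $\varphi(\bar x,\bar y)$ and $\bar a\in{}^{\lg(\bar y)}M$, $\varphi(M,\bar a)=\{\bar c: M\models\varphi[\bar c,\bar a]\}$. $\mathrm{Aff}_1$ is the set of formulas $\varphi(\bar x)$ with $\lg(\bar x)<\theta$ such that $\varphi(M)$ is closed under $(\bar a,\bar b,\bar c)\mapsto\bar a-\bar b+\bar c$ (coordinatewise). For an ordinal $\alpha_*$, formulas $\varphi(\bar x,\bar y)$ and $\bar\psi=\langle\psi_\alpha(\bar x,\bar y):\alpha<\alpha_*\rangle$, and $\bar b\in{}^{\lg\bar x}M$, $\bar a\in{}^{\lg\bar y}M$, let $\mathrm{set}_{\bar\psi}(\bar b,\bar a)=\{\alpha<\alpha_*:\bar b^\frown\bar a\in\psi_\alpha(M)\}$; $\mathrm{Set}_{\varphi,\bar\psi}(\bar a)=\{\mathrm{set}_{\bar\psi}(\bar c,\bar a):\bar c\in\varphi(M,\bar a)\}$; and $\mathrm{inter}_{\varphi,\bar\psi}(\bar a)$ is the set of pairs $(w_0,w_1)$ with $w_0\subseteq w_1\subseteq\alpha_*$ such that there are $u_0,u_1\in\mathrm{Set}_{\varphi,\bar\psi}(\bar a)$ with $w_1\subseteq u_1$ and $u_0\cap w_1=w_0$. $\mathrm{Aff}_2$ is the smallest class of formulas containing the atomic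 formulas and closed under: (a) arbitrary conjunctions; (b) existential quantification $\exists\bar x$; (c) if $\varphi(\bar x,\bar y)$ and $\psi_\alpha(\bar x,\bar y)$ ($\alpha<\alpha_*$) are in $\mathrm{Aff}_2$ with $\psi_\alpha(M)\subseteq\varphi(M)$ for all $\alpha<\alpha_*$, and $\Upsilon\subseteq\{(w_0,w_1):w_0\subseteq w_1\subseteq\alpha_*\}$, then the formula $\vartheta(\bar y)=\Theta_{\varphi,\bar\psi,\Upsilon}(\bar y)$ is in $\mathrm{Aff}_2$, where $M\models\vartheta[\bar a]$ iff $\Upsilon\subseteq\mathrm{inter}_{\varphi,\bar\psi}(\bar a)$. *)

(* Defs.v *)
From HB Require Import structures.
From mathcomp Require Import all_boot all_order all_algebra.
Set Implicit Arguments. Unset Strict Implicit. Unset Printing Implicit Defensive.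
Import GRing.Theory.
Local Open Scope ring_scope.

Section AffDefs.
Variables (R : pzRingType) (M : lmodType R) (Th : Type).

(* The cardinal theta is represented as the cardinality of the type Th. *)
Definition infinite_card : Prop := exists f : nat -> Th, injective f.

Definition lt_theta (I : Type) : Prop :=
  (exists f : I -> Th, injective f) /\ ~ (exists g : Th -> I, injective g).

Inductive term (I : Type) : Type :=
| TVar of I
| TZero
| TAdd of term I & term I
| TOpp of term I
| TScale of R & term I.

Fixpoint eval_term (I : Type) (a : I -> M) (t : term I) : M :=
  match t with
  | TVar i => a i
  | TZero => 0
  | TAdd t1 t2 => eval_term a t1 + eval_term a t2
  | TOpp t1 => - eval_term a t1
  | TScale r t1 => r *: eval_term a t1
  end.

Definition join (X Y : Type) (b : X -> M) (a : Y -> M) : X + Y -> M :=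
  fun s => match s with inl x => b x | inr y => a y end.

Definition Aff1 (I : Type) (phi : (I -> M) -> Prop) : Prop :=
  lt_theta I /\
  forall a b c : I -> M, phi a -> phi b -> phi c ->
    phi (fun i => a i - b i + c i).

Section ThetaConstr.
Variables (X Y A : Type) (phi : (X + Y -> M) -> Prop)
          (psi : A -> (X + Y -> M) -> Prop).

Definition set_psi (b : X -> M) (a : Y -> M) : A -> Prop :=
  fun al => psi al (join b a).

Definition in_SetF (a : Y -> M) (u : A -> Prop) : Prop :=
  exists c : X -> M, phi (join c a) /\ (forall al, u al <-> set_psi c a al).

Definition in_inter (a : Y -> M) (w : (A -> Prop) * (A -> Prop)) : Prop :=
  (forall al, w.1 al -> w.2 al) /\
  exists u0 u1, in_SetF a u0 /\ in_SetF a u1 /\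
    (forall al, w.2 al -> u1 al) /\
    (forall al, (u0 al /\ w.2 al) <-> w.1 al).

Definition Theta_form (Ups : (A -> Prop) * (A -> Prop) -> Prop) (a : Y -> M)
  : Prop := forall w, Ups w -> in_inter a w.
End ThetaConstr.

(* Aff_2, as a class of (context, defined relation) pairs. *)
Inductive Aff2 : forall I : Type, ((I -> M) -> Prop) -> Prop :=
| Aff2_atomic (I : Type) (t1 t2 : term I) :
    lt_theta I -> Aff2 (fun a : I -> M => eval_term a t1 = eval_term a t2)
| Aff2_conj (I K : Type) (phis : K -> (I -> M) -> Prop) :
    lt_theta I -> (forall k, Aff2 (phis k)) ->
    Aff2 (fun a : I -> M => forall k, phis k a)
| Aff2_exists (X Y : Type) (phi : (X + Y -> M) -> Prop) :
    lt_theta (X + Y) -> Aff2 phi ->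
    Aff2 (fun a : Y -> M => exists b : X -> M, phi (join b a))
| Aff2_subst (I J : Type) (sigma : I -> J) (phi : (I -> M) -> Prop) :
    lt_theta J -> Aff2 phi -> Aff2 (fun a : J -> M => phi (fun i => a (sigma i)))
| Aff2_Theta (X Y A : Type) (phi : (X + Y -> M) -> Prop)
    (psi : A -> (X + Y -> M) -> Prop) (Ups : (A -> Prop) * (A -> Prop) -> Prop) :
    lt_theta (X + Y) -> Aff2 phi -> (forall al, Aff2 (psi al)) ->
    (forall al d, psi al d -> phi d) ->
    (forall w, Ups w -> forall al, w.1 al -> w.2 al) ->
    Aff2 (Theta_form phi psi Ups).

End AffDefs.

(* Main.v *)
Require Import Defs.
From mathcomp Require Import all_boot all_order all_algebra.
From Stdlib Require Import FunctionalExtensionality.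
Set Implicit Arguments. Unset Strict Implicit. Unset Printing Implicit Defensive.
Import GRing.Theory.
Local Open Scope ring_scope.

Lemma lt_theta_inr (Th X Y : Type) : lt_theta Th (X + Y) -> lt_theta Th Y.
Proof.
move=> [[f finj] ng]; split.
  exists (fun y => f (inr y)) => y1 y2 /finj [] //.
move=> [g ginj]; apply: ng; exists (fun t => inr (g t)) => t1 t2 [] /ginj //.
Qed.

Lemma eval_aff (R : pzRingType) (M : lmodType R) I (a b c : I -> M) (t : term R I) :
  eval_term (fun i => a i - b i + c i) t = eval_term a t - eval_term b t + eval_term c t.
Proof.
elim: t => //= [|t1 IH1 t2 IH2|t IH|r t IH].
- by rewrite subr0 addr0.
- rewrite IH1 IH2 addrACA; congr (_ + _).
  by rewrite addrACA -opprD.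
- by rewrite IH !opprD.
- by rewrite IH scalerDr scalerBr.
Qed.

Lemma join_aff (R : pzRingType) (M : lmodType R) X Y (b1 b2 b3 : X -> M) (a1 a2 a3 : Y -> M) :
  join (fun x => b1 x - b2 x + b3 x) (fun y => a1 y - a2 y + a3 y)
  = (fun s => join b1 a1 s - join b2 a2 s + join b3 a3 s).
Proof. by apply: functional_extensionality => -[]. Qed.

Lemma join_back (R : pzRingType) (M : lmodType R) X Y (b1 b2 b3 : X -> M) (a1 a2 a3 : Y -> M) :
  (fun s => join (fun x => b1 x - b2 x + b3 x) (fun y => a1 y - a2 y + a3 y) s
     - join b3 a3 s + join b2 a2 s) = join b1 a1.
Proof. by apply: functional_extensionality => -[] z /=; rewrite addrK subrK. Qed.

Theorem proposition2p22 (R : pzRingType) (M : lmodType R) (Th : Type) :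
  infinite_card Th ->
  forall (I : Type) (phi : (I -> M) -> Prop),
    @Aff2 R M Th I phi -> @Aff1 R M Th I phi.
Proof.
move=> _ I phi H; elim: H.
- move=> J t1 t2 lt; split=> // a b c /= e1 e2 e3.
  by rewrite !eval_aff e1 e2 e3.
- move=> J K phis lt _ IH; split=> // a b c Ha Hb Hc k.
  by case: (IH k) => _ Hk; apply: Hk.
- move=> X Y ph lt _ [_ IH]; split; first exact: lt_theta_inr lt.
  move=> a b c [b1 H1] [b2 H2] [b3 H3].
  exists (fun x => b1 x - b2 x + b3 x); rewrite join_aff; exact: IH.
- move=> J K sigma ph lt _ [_ IH]; split=> // a b c Ha Hb Hc.
  exact: (IH _ _ _ Ha Hb Hc).
- move=> X Y A ph psi Ups lt _ [_ IHph] _ IHpsi psiph Upsw.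
  split; first exact: lt_theta_inr lt.
  move=> a1 a2 a3 T1 T2 T3 w Uw.
  have w01 := Upsw w Uw.
  case: (T1 w Uw) => _ [u01 [u11 [[c01 [P01 S01]] [[c11 [P11 S11]] [W11 W01]]]]].
  case: (T2 w Uw) => _ [u02 [u12 [[c02 [P02 S02]] [[c12 [P12 S12]] [W12 W02]]]]].
  case: (T3 w Uw) => _ [u03 [u13 [[c03 [P03 S03]] [[c13 [P13 S13]] [W13 W03]]]]].
  pose d := fun y => a1 y - a2 y + a3 y.
  pose e0 := fun x => c01 x - c12 x + c13 x.
  pose e1 := fun x => c11 x - c12 x + c13 x.
  split=> //.
  exists (set_psi psi e0 d), (set_psi psi e1 d).
  have Pe0 : ph (join e0 d) by rewrite /e0 /d join_aff; exact: IHph.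
  have Pe1 : ph (join e1 d) by rewrite /e1 /d join_aff; exact: IHph.
  split; first by exists e0.
  split; first by exists e1.
  split.
    move=> al /= w1al; rewrite /set_psi /e1 /d join_aff.
    case: (IHpsi al) => _ Hc; apply: Hc.
    + by apply/S11; apply: W11.
    + by apply/S12; apply: W12.
    + by apply/S13; apply: W13.
  move=> al; split.
    move=> [ps w1al]; apply/W01; split=> //; apply/S01.
    rewrite /set_psi -(join_back c01 c12 c13 a1 a2 a3).
    case: (IHpsi al) => _ Hc; apply: Hc.
    + exact: ps.
    + by apply/S13; apply: W13.
    + by apply/S12; apply: W12.
  move=> w0al; have w1al := w01 al w0al; split=> //.
  rewrite /set_psi /e0 /d join_aff.
  case: (IHpsi al) => _ Hc; apply: Hc.
  + by apply/S01; case/W01: w0al.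
  + by apply/S12; apply: W12.
  + by apply/S13; apply: W13.
Qed.
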